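(* Let $S\subset\mathcal P$ be a rectangular lattice and let $\Delta$ be a bounded region of $\mathcal L_S$ which does not contain the origin $O$ of $\mathbb{R}^2$, with $n$ sides and sign sequence $D_k$, $k\in\mathbb{Z}/n\mathbb{Z}$, as in the context. Then there is no $k$ with $D_k=D_{k+1}=D_{k+2}$.
   Context: $\mathcal P=\mathbb{R}^2\setminus\{(0,0)\}$; for $P=(A,B)\in\mathcal P$, $L_P$ is the line $Ax+By=1$ in $\mathbb{R}^2$; $\mathcal L_S=\{L_P\mid P\in S\}$. A rectangular lattice is a set of the form $S=\{(a+k\delta_x,\,b+j\delta_y)\mid k,j\in\mathbb{Z},\ 0\le k\le N,\ 0\le j\le M\}\setminus\{(0,0)\}$, where $(a,b)\ne(0,0)$, $\delta_x,\delta_y>0$, $N,M\in\mathbb{Z}_{\ge0}$, and the corners $(a,b+M\delta_y)$, $(a+N\delta_x,b)$, $(a+N\delta_x,b+M\delta_y)$ are all different from $(0,0)$. Regions of $\mathcal L_S$ are closures of connected components of $\mathbb{R}^2\setminus\bigcup_{P\in S}L_P$. For a bounded region $\Delta$ with $n$ sides, $L_k$ ($k\in\mathbb{Z}/n\mathbb{Z}$) are the lines containing the sides of $\Delta$ in clockwise order around $\Delta$, and $D_k\in\{l,r\}$ is the side (left or right) of $L_k$ on which $O$ lies for a traveller moving along the side of $\Delta$ on $L_k$ clockwise around $\Delta$ (with $\Delta$ on the traveller's right). *)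

(* Defs.v *)
From HB Require Import structures.
From mathcomp Require Import all_boot all_order all_algebra.
From mathcomp Require Import all_classical all_reals all_analysis.
Set Implicit Arguments. Unset Strict Implicit. Unset Printing Implicit Defensive.
Import Order.TTheory GRing.Theory Num.Theory.
Import numFieldNormedType.Exports.
Local Open Scope classical_set_scope.
Local Open Scope ring_scope.

Section Defs.
Variable R : realType.

Local Notation pt := (R * R)%type.

Definition origin : pt := (0, 0).

Definition lineP (P : pt) : set pt := [set p : pt | P.1 * p.1 + P.2 * p.2 = 1].

Definition rect_lattice (S : set pt) : Prop :=
  exists (a b dx dy : R) (N M : nat),
    [/\ (a, b) <> origin, 0 < dx, 0 < dy,
        [/\ (a, b + M%:R * dy) <> origin, (a + N%:R * dx, b) <> origin
          & (a + N%:R * dx, b + M%:R * dy) <> origin] &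
        S = [set p : pt | exists k j : nat, [/\ (k <= N)%N, (j <= M)%N
                & p = (a + k%:R * dx, b + j%:R * dy)]] `\ origin].

Definition arr_complement (S : set pt) : set pt :=
  ~` (\bigcup_(P in S) lineP P).

Definition is_region (S : set pt) (D : set pt) : Prop :=
  exists x : pt, arr_complement S x /\
    D = closure (connected_component (arr_complement S) x).

Definition bounded_pt (D : set pt) : Prop :=
  exists M : R, forall p, D p -> `|p.1| <= M /\ `|p.2| <= M.

Definition is_line (L : set pt) : Prop :=
  exists a b c : R, (a, b) <> origin /\ L = [set p : pt | a * p.1 + b * p.2 = c].

(* L is the line containing a side (edge) of the convex polygon D:
   D lies in a closed half-plane bounded by L and D meets L in a
   nondegenerate segment (at least two distinct points). *)
Definition side_line (D : set pt) (L : set pt) : Prop :=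
  exists a b c : R,
    [/\ (a, b) <> origin, L = [set p : pt | a * p.1 + b * p.2 = c],
        (forall p, D p -> a * p.1 + b * p.2 <= c) &
        exists p q : pt, [/\ p <> q, D p, D q, L p & L q]].

Definition segment (u w : pt) : set pt :=
  [set p : pt | exists t : R, [/\ 0 <= t, t <= 1 &
     p = (u.1 + t * (w.1 - u.1), u.2 + t * (w.2 - u.2))]].

(* cross product of u and w; w lies to the right of direction u iff cross u w < 0 *)
Definition cross (u w : pt) : R := u.1 * w.2 - u.2 * w.1.

Definition vsub (u w : pt) : pt := (u.1 - w.1, u.2 - w.2).

(* L 0, ..., L (n-1) are the lines containing the sides of D, listed in
   clockwise order around D, and v k is the vertex at which a traveller
   going clockwise around D (with D on its right) enters the side on L k;
   so the side on L k is the segment from v k to v (k+1). *)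
Definition clockwise_sides (D : set pt) (n : nat)
    (L : 'I_n -> set pt) (v : 'I_n -> pt) : Prop :=
  [/\ injective L,
      (forall Lc, side_line D Lc <-> exists k, Lc = L k),
      (forall k, v k <> v (ordS k)),
      (forall k, D `&` L k = segment (v k) (v (ordS k))) &
      (forall k q, D q -> cross (vsub (v (ordS k)) (v k)) (vsub q (v k)) <= 0)].

Inductive lr := Left | Right.

(* D_k : the side (left/right) of L_k on which O lies, for the traveller
   moving from v k to v (k+1).  (O never lies on L_k: the value in the
   degenerate case cross = 0 is irrelevant.) *)
Definition side_of_O n (v : 'I_n -> pt) (k : 'I_n) : lr :=
  if cross (vsub (v (ordS k)) (v k)) (vsub origin (v k)) < 0 then Right else Left.

End Defs.

(* Main.v *)
Require Import Defs.
From HB Require Import structures.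
From mathcomp Require Import all_boot all_order all_algebra.
From mathcomp Require Import all_classical all_reals all_analysis.
From mathcomp Require Import ring lra zify.
Set Implicit Arguments. Unset Strict Implicit. Unset Printing Implicit Defensive.
Import Order.TTheory GRing.Theory Num.Theory.
Import numFieldNormedType.Exports.
Local Open Scope classical_set_scope.
Local Open Scope ring_scope.

Section Lat.
Variable R : realType.
Local Notation pt := (R * R)%type.
Variables (a0 dx : R) (N : nat).
Hypothesis hdx : 0 < dx.

Definition gx (x : R) := exists i : nat, (i <= N)%N /\ x = a0 + i%:R * dx.

Lemma gx_left x y : gx x -> gx y -> y < x -> gx (x - dx).
Proof.
move=> [i [iN ->]] [j [jN ->]] yx.
have ji : (j < i)%N.
  by rewrite -(ltr_nat R); rewrite -(ltr_pM2r hdx); lra.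
exists i.-1; split; first by apply: leq_trans (leq_pred _) iN.
have E : i%:R = (i.-1)%:R + 1 :> R.
  by rewrite natr1 prednK //; apply: leq_ltn_trans ji.
rewrite E; ring.
Qed.

Lemma gx_right x y : gx x -> gx y -> x < y -> gx (x + dx).
Proof.
move=> [i [iN ->]] [j [jN ->]] yx.
have ji : (i < j)%N.
  by rewrite -(ltr_nat R); rewrite -(ltr_pM2r hdx); lra.
exists i.+1; split; first by apply: leq_trans ji jN.
rewrite -natr1; ring.
Qed.

Lemma gx_refl x1 x2 x3 : gx x1 -> gx x2 -> gx x3 ->
  (x2 <= 2 * x2 - x1 <= x3) || (x3 <= 2 * x2 - x1 <= x2) -> gx (2 * x2 - x1).
Proof.
move=> [i1 [i1N ->]] [i2 [i2N ->]] [i3 [i3N ->]] /orP[/andP[h1 h2]|/andP[h1 h2]].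
- have h1' : (i1 <= i2)%N by rewrite -(ler_nat R) -(ler_pM2r hdx); lra.
  have h2' : (i2 + i2 <= i3 + i1)%N by rewrite -(ler_nat R) !natrD -(ler_pM2r hdx); lra.
  exists (i2 + i2 - i1)%N; split; first by lia.
  rewrite natrB; last by lia.
  rewrite natrD; ring.
- have h1' : (i2 <= i1)%N by rewrite -(ler_nat R) -(ler_pM2r hdx); lra.
  have h2' : (i3 + i1 <= i2 + i2)%N by rewrite -(ler_nat R) !natrD -(ler_pM2r hdx); lra.
  exists (i2 + i2 - i1)%N; split; first by lia.
  rewrite natrB; last by lia.
  rewrite natrD; ring.
Qed.
End Lat.

Definition NF (R : realType) (u w X : (R * R)%type) :=
  0 <= cross X w * cross u X /\ (cross u X = 0 -> 0 <= cross X w * cross u w)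
  /\ (cross X w = 0 -> 0 <= cross u X * cross u w).

Lemma interior_aux (R : realType) (X1 X2 u1 u2 w1 w2 : R) :
  0 <= X1 -> 0 <= u1 -> 0 <= w1 -> (u1 * w2 - u2 * w1) != 0 ->
  (X1 * w2 - X2 * w1) * (u1 * w2 - u2 * w1) < 0 ->
  (u1 * X2 - u2 * X1) * (u1 * w2 - u2 * w1) < 0 -> False.
Proof.
move=> h1 h2 h3 hc hA hB.
set c := u1 * w2 - u2 * w1 in hc hA hB.
set A := (X1 * w2 - X2 * w1) * c in hA.
set B := (u1 * X2 - u2 * X1) * c in hB.
have id : c * c * X1 = A * u1 + B * w1 by rewrite /A /B /c; ring.
have cc : 0 < c * c by rewrite lt0r mulf_neq0 //= -expr2 sqr_ge0.
have e1 : A * u1 <= 0 by nra.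
have e2 : B * w1 <= 0 by nra.
have e3 : A * u1 = 0 by nra.
have e4 : B * w1 = 0 by nra.
have u10 : u1 = 0 by move/eqP: e3; rewrite mulf_eq0 => /orP[/eqP|/eqP] //; lra.
have w10 : w1 = 0 by move/eqP: e4; rewrite mulf_eq0 => /orP[/eqP|/eqP] //; lra.
move: hc; rewrite /c u10 w10; apply/negP; rewrite negbK; apply/eqP; ring.
Qed.

Lemma neigh_aux (R : realType) (d u1 u2 w1 w2 : R) : 0 < d ->
  (u1 * w2 - u2 * w1) != 0 ->
  NF (u1, u2) (w1, w2) (d, 0) -> NF (u1, u2) (w1, w2) (-d, 0) -> u2 * w2 < 0.
Proof.
rewrite /NF /cross /=.
move=> hd hc [h1 [h2 h3]] [h4 [h5 h6]].
rewrite ?mulr0 ?mul0r ?subr0 ?sub0r in h1 h2 h3 h4 h5 h6.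
have dd : 0 < d * d by rewrite mulr_gt0.
have le : u2 * w2 <= 0.
  by rewrite -(pmulr_lle0 _ dd); nra.
rewrite lt_neqAle le andbT; apply/negP => /eqP/eqP; rewrite mulf_eq0 => /orP[]/eqP e.
- have : 0 <= d * w2 * (u1 * w2 - u2 * w1) by apply: h2; rewrite e; ring.
  have : 0 <= - d * w2 * (u1 * w2 - u2 * w1) by apply: h5; rewrite e; ring.
  move=> k1 k2.
  have : w2 * (u1 * w2 - u2 * w1) = 0 by nra.
  move/eqP; rewrite mulf_eq0 (negbTE hc) orbF => /eqP w20.
  by move: hc; rewrite e w20 !mulr0 mul0r subr0 eqxx.
- have k1 := h3 ltac:(rewrite e; ring).
  have k2 := h6 ltac:(rewrite e; ring).
  have : u2 * (u1 * w2 - u2 * w1) = 0 by nra.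
  move/eqP; rewrite mulf_eq0 (negbTE hc) orbF => /eqP u20.
  by move: hc; rewrite e u20 !mulr0 mul0r subr0 eqxx.
Qed.

Lemma neigh_aux2 (R : realType) (d u1 u2 w1 w2 : R) : 0 < d ->
  (u1 * w2 - u2 * w1) != 0 ->
  NF (u1, u2) (w1, w2) (0, d) -> NF (u1, u2) (w1, w2) (0, -d) -> u1 * w1 < 0.
Proof.
rewrite /NF /cross /=.
move=> hd hc [h1 [h2 h3]] [h4 [h5 h6]].
rewrite ?mulr0 ?mul0r ?subr0 ?sub0r in h1 h2 h3 h4 h5 h6.
have dd : 0 < d * d by rewrite mulr_gt0.
have le : u1 * w1 <= 0.
  by rewrite -(pmulr_lle0 _ dd); nra.
rewrite lt_neqAle le andbT; apply/negP => /eqP/eqP; rewrite mulf_eq0 => /orP[]/eqP e.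
- have k1 := h2 ltac:(rewrite e; ring).
  have k2 := h5 ltac:(rewrite e; ring).
  have : w1 * (u1 * w2 - u2 * w1) = 0 by nra.
  move/eqP; rewrite mulf_eq0 (negbTE hc) orbF => /eqP w10.
  by move: hc; rewrite e w10 !mulr0 mul0r subr0 eqxx.
- have k1 := h3 ltac:(rewrite e; ring).
  have k2 := h6 ltac:(rewrite e; ring).
  have : u1 * (u1 * w2 - u2 * w1) = 0 by nra.
  move/eqP; rewrite mulf_eq0 (negbTE hc) orbF => /eqP u10.
  by move: hc; rewrite e u10 !mulr0 mul0r subr0 eqxx.
Qed.

Lemma neg_prod (R : realType) (u w : R) : u * w < 0 -> (u + w) * u > 0 -> (u + w) * w < 0.
Proof.
move=> h1 h2.
have : (u + w) * w * (u * u) < 0.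
  have -> : (u + w) * w * (u * u) = ((u + w) * u) * (u * w) by ring.
  by rewrite pmulr_rlt0.
have uu : 0 < u * u.
  rewrite lt0r -expr2 sqr_ge0 andbT sqrf_eq0; apply/negP => /eqP u0.
  by move: h1; rewrite u0 mul0r ltxx.
by rewrite pmulr_llt0.
Qed.

Lemma cand3 (R : realType) (u1 u2 w1 w2 : R) :
  u1 * w1 < 0 -> u2 * w2 < 0 -> (u1 + w1) * u1 > 0 -> (u2 + w2) * w2 > 0 ->
  NF (u1, u2) (w1, w2) (- w1, u2) -> False.
Proof.
move=> h1 h2 h3 h4 [+ _]; rewrite /cross /=.
have a1 : (u1 + w1) * w1 < 0 by apply: neg_prod.
have a2 : (w2 + u2) * u2 < 0 by apply: neg_prod; [rewrite mulrC | rewrite addrC].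
have -> : (- w1 * w2 - u2 * w1) * (u1 * u2 - u2 * - w1)
   = - (((u1 + w1) * w1) * ((w2 + u2) * u2)) by ring.
rewrite oppr_ge0 => h; have : 0 < ((u1 + w1) * w1) * ((w2 + u2) * u2) by rewrite nmulr_rgt0.
by rewrite ltNge h.
Qed.

Lemma cand4 (R : realType) (u1 u2 w1 w2 : R) :
  u1 * w1 < 0 -> u2 * w2 < 0 -> (u1 + w1) * w1 > 0 -> (u2 + w2) * u2 > 0 ->
  NF (u1, u2) (w1, w2) (u1, - w2) -> False.
Proof.
move=> h1 h2 h3 h4 [+ _]; rewrite /cross /=.
have a1 : (w1 + u1) * u1 < 0 by apply: neg_prod; [rewrite mulrC | rewrite addrC].
have a2 : (u2 + w2) * w2 < 0 by apply: neg_prod.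
have -> : (u1 * w2 - - w2 * w1) * (u1 * - w2 - u2 * u1)
   = - (((w1 + u1) * u1) * ((u2 + w2) * w2)) by ring.
rewrite oppr_ge0 => h; have : 0 < ((w1 + u1) * u1) * ((u2 + w2) * w2) by rewrite nmulr_rgt0.
by rewrite ltNge h.
Qed.

Lemma cand_negu (R : realType) (u w : R * R) : cross u w != 0 ->
  NF u w (- u.1, - u.2) -> False.
Proof.
case: u w => u1 u2 [w1 w2]; rewrite /NF /cross /= => hc [_ [h _]].
have := h ltac:(ring).
have -> : (- u1 * w2 - - u2 * w1) * (u1 * w2 - u2 * w1) = - ((u1 * w2 - u2 * w1) ^+ 2) by ring.
rewrite oppr_ge0 leNgt => /negP; apply.
by rewrite lt0r sqrf_eq0 hc sqr_ge0.
Qed.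

Lemma cand_negw (R : realType) (u w : R * R) : cross u w != 0 ->
  NF u w (- w.1, - w.2) -> False.
Proof.
case: u w => u1 u2 [w1 w2]; rewrite /NF /cross /= => hc [_ [_ h]].
have := h ltac:(ring).
have -> : (u1 * - w2 - u2 * - w1) * (u1 * w2 - u2 * w1) = - ((u1 * w2 - u2 * w1) ^+ 2) by ring.
rewrite oppr_ge0 leNgt => /negP; apply.
by rewrite lt0r sqrf_eq0 hc sqr_ge0.
Qed.

Lemma refl_cond (R : realType) (a b c : R) : (a - b) * (c - b) < 0 ->
  0 <= ((a - b) + (c - b)) * (c - b) ->
  (b <= 2 * b - a <= c) || (c <= 2 * b - a <= b).
Proof.
move=> h1 h2; case: (ltP 0 (c - b)) => hc.
- apply/orP; left; apply/andP; split; nra.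
- apply/orP; right; apply/andP; split; nra.
Qed.

Lemma lattice_main (R : realType) (a0 b0 dx dy : R) (N M : nat) (P1 P2 P3 Q : R * R) :
  0 < dx -> 0 < dy ->
  (forall G : R * R, gx a0 dx N G.1 -> gx b0 dy M G.2 ->
      NF (vsub P1 P2) (vsub P3 P2) (vsub G P2)) ->
  gx a0 dx N P1.1 -> gx b0 dy M P1.2 -> gx a0 dx N P2.1 -> gx b0 dy M P2.2 ->
  gx a0 dx N P3.1 -> gx b0 dy M P3.2 -> gx a0 dx N Q.1 -> gx b0 dy M Q.2 ->
  cross (vsub P1 P2) (vsub P3 P2) != 0 ->
  cross (vsub Q P2) (vsub P3 P2) * cross (vsub P1 P2) (vsub P3 P2) < 0 ->
  cross (vsub P1 P2) (vsub Q P2) * cross (vsub P1 P2) (vsub P3 P2) < 0 -> False.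
Proof.
case: P1 P2 P3 Q => [x1 y1] [x2 y2] [x3 y3] [xq yq] hdx hdy NFall /=.
move=> g1x g1y g2x g2y g3x g3y gqx gqy.
rewrite /cross /vsub /= => hc hA hB.
have hxl : exists x, gx a0 dx N x /\ x < x2.
  case: (ltP xq x2) => [h|h]; first by exists xq.
  case: (ltP x1 x2) => [h'|h']; first by exists x1.
  case: (ltP x3 x2) => [h''|h'']; first by exists x3.
  exfalso; apply: (interior_aux (X1 := xq - x2) (X2 := yq - y2) (u1 := x1 - x2)
     (u2 := y1 - y2) (w1 := x3 - x2) (w2 := y3 - y2)) => //; lra.
have hxr : exists x, gx a0 dx N x /\ x2 < x.
  case: (ltP x2 xq) => [h|h]; first by exists xq.
  case: (ltP x2 x1) => [h'|h']; first by exists x1.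
  case: (ltP x2 x3) => [h''|h'']; first by exists x3.
  exfalso; apply: (interior_aux (X1 := x2 - xq) (X2 := yq - y2) (u1 := x2 - x1)
     (u2 := y1 - y2) (w1 := x2 - x3) (w2 := y3 - y2)); try lra; nra.
have hyl : exists y, gx b0 dy M y /\ y < y2.
  case: (ltP yq y2) => [h|h]; first by exists yq.
  case: (ltP y1 y2) => [h'|h']; first by exists y1.
  case: (ltP y3 y2) => [h''|h'']; first by exists y3.
  exfalso; apply: (interior_aux (X1 := yq - y2) (X2 := xq - x2) (u1 := y1 - y2)
     (u2 := x1 - x2) (w1 := y3 - y2) (w2 := x3 - x2)); try lra; nra.
have hyr : exists y, gx b0 dy M y /\ y2 < y.
  case: (ltP y2 yq) => [h|h]; first by exists yq.
  case: (ltP y2 y1) => [h'|h']; first by exists y1.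
  case: (ltP y2 y3) => [h''|h'']; first by exists y3.
  exfalso; apply: (interior_aux (X1 := y2 - yq) (X2 := xq - x2) (u1 := y2 - y1)
     (u2 := x1 - x2) (w1 := y2 - y3) (w2 := x3 - x2)); try lra; nra.
have [xl [gxl xl2]] := hxl; have [xr [gxr xr2]] := hxr.
have [yl [gyl yl2]] := hyl; have [yr [gyr yr2]] := hyr.
have gxm := gx_left hdx g2x gxl xl2.
have gxp := gx_right hdx g2x gxr xr2.
have gym := gx_left hdy g2y gyl yl2.
have gyp := gx_right hdy g2y gyr yr2.
have hvs : forall a b c d : R, vsub (a, b) (c, d) = (a - c, b - d) by [].
have n1 := NFall (x2 - dx, y2) gxm g2y.
have n2 := NFall (x2 + dx, y2) gxp g2y.
have n3 := NFall (x2, y2 - dy) g2x gym.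
have n4 := NFall (x2, y2 + dy) g2x gyp.
rewrite !hvs in n1 n2 n3 n4.
rewrite (_ : x2 - dx - x2 = - dx) ?subrr in n1; last by ring.
rewrite (_ : x2 + dx - x2 = dx) ?subrr in n2; last by ring.
rewrite (_ : y2 - dy - y2 = - dy) ?subrr in n3; last by ring.
rewrite (_ : y2 + dy - y2 = dy) ?subrr in n4; last by ring.
have hu2w2 := neigh_aux hdx hc n2 n1.
have hu1w1 := neigh_aux2 hdy hc n4 n3.
case: (boolP ((0 <= (x1 - x2 + (x3 - x2)) * (x1 - x2)) &&
              (0 <= (y1 - y2 + (y3 - y2)) * (y1 - y2)))) => [/andP[c21 c22]|nc2].
  have gGx := gx_refl hdx g3x g2x g1x (@refl_cond _ x3 x2 x1 ltac:(lra) ltac:(lra)).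
  have gGy := gx_refl hdy g3y g2y g1y (@refl_cond _ y3 y2 y1 ltac:(lra) ltac:(lra)).
  have := NFall (2 * x2 - x3, 2 * y2 - y3) gGx gGy; rewrite !hvs.
  rewrite (_ : 2 * x2 - x3 - x2 = - (x3 - x2)); last by ring.
  rewrite (_ : 2 * y2 - y3 - y2 = - (y3 - y2)); last by ring.
  exact: (cand_negw (u := (x1 - x2, y1 - y2)) (w := (x3 - x2, y3 - y2))).
case: (boolP ((0 <= (x1 - x2 + (x3 - x2)) * (x3 - x2)) &&
              (0 <= (y1 - y2 + (y3 - y2)) * (y3 - y2)))) => [/andP[c11 c12]|nc1].
  have gGx := gx_refl hdx g1x g2x g3x (@refl_cond _ x1 x2 x3 ltac:(lra) ltac:(lra)).
  have gGy := gx_refl hdy g1y g2y g3y (@refl_cond _ y1 y2 y3 ltac:(lra) ltac:(lra)).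
  have := NFall (2 * x2 - x1, 2 * y2 - y1) gGx gGy; rewrite !hvs.
  rewrite (_ : 2 * x2 - x1 - x2 = - (x1 - x2)); last by ring.
  rewrite (_ : 2 * y2 - y1 - y2 = - (y1 - y2)); last by ring.
  exact: (cand_negu (u := (x1 - x2, y1 - y2)) (w := (x3 - x2, y3 - y2))).
rewrite negb_and -!ltNge in nc2; rewrite negb_and -!ltNge in nc1.
have sx : 0 <= (x1 - x2 + (x3 - x2)) * (x1 - x2) + (x1 - x2 + (x3 - x2)) * (x3 - x2).
  by rewrite -mulrDr -expr2 sqr_ge0.
have sy : 0 <= (y1 - y2 + (y3 - y2)) * (y1 - y2) + (y1 - y2 + (y3 - y2)) * (y3 - y2).
  by rewrite -mulrDr -expr2 sqr_ge0.
case/orP: nc2 => [hX|hY].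
- (* X' < 0 : X > 0, so Y < 0, Y' > 0 : cand4 *)
  have hX' : 0 < (x1 - x2 + (x3 - x2)) * (x3 - x2) by lra.
  case/orP: nc1 => [hX2|hY2]; first by exfalso; lra.
  have hY' : 0 < (y1 - y2 + (y3 - y2)) * (y1 - y2) by lra.
  have gGy := gx_refl hdy g3y g2y g1y (@refl_cond _ y3 y2 y1 ltac:(lra) ltac:(lra)).
  have := NFall (x1, 2 * y2 - y3) g1x gGy; rewrite !hvs.
  rewrite (_ : 2 * y2 - y3 - y2 = - (y3 - y2)); last by ring.
  by apply: cand4.
- have hY' : 0 < (y1 - y2 + (y3 - y2)) * (y3 - y2) by lra.
  case/orP: nc1 => [hX2|hY2]; last by exfalso; lra.
  have hX' : 0 < (x1 - x2 + (x3 - x2)) * (x1 - x2) by lra.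
  have gGx := gx_refl hdx g3x g2x g1x (@refl_cond _ x3 x2 x1 ltac:(lra) ltac:(lra)).
  have := NFall (2 * x2 - x3, y1) gGx g1y; rewrite !hvs.
  rewrite (_ : 2 * x2 - x3 - x2 = - (x3 - x2)); last by ring.
  by apply: cand3.
Qed.


Lemma lin_cont (R : realType) (Q : R * R) :
  continuous (fun p : R * R => Q.1 * p.1 + Q.2 * p.2 - 1).
Proof.
move=> p; apply: cvgB; last exact: cvg_cst.
apply: cvgD; apply: cvgMr; [exact: cvg_fst | exact: cvg_snd].
Qed.

Lemma conn_sign (R : realType) (A : set (R * R)) (g : R * R -> R) (x y : R * R) :
  connected A -> continuous g -> A x -> A y -> (forall z, A z -> g z != 0) ->
  0 < g x -> 0 < g y.
Proof.
move=> cA cg Ax Ay nz gx; rewrite ltNge; apply/negP => gy.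
have ci : connected (g @` A).
  apply: connected_continuous_connected => //.
  by move=> z; apply: continuous_subspaceT.
have /connected_intervalP hI := ci.
have : (g @` A) 0.
  apply: (hI (g y) (g x)); [by exists y | by exists x | by rewrite gy ltW].
by move=> [z Az gz0]; move: (nz z Az); rewrite gz0 eqxx.
Qed.

Lemma seg_component (R : realType) (A : set (R * R)) (x y : R * R) :
  (forall t : R, 0 <= t <= 1 -> A (x.1 + t * (y.1 - x.1), x.2 + t * (y.2 - x.2))) ->
  connected_component A x y.
Proof.
move=> hA.
pose gam := fun t : R => (x.1 + t * (y.1 - x.1), x.2 + t * (y.2 - x.2)).
exists (gam @` `[0, 1]).
  split.
  - exists 0; first by rewrite /= in_itv /= lexx ler01.
    by rewrite /gam !mul0r !addr0; case: x {hA gam}.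
  - move=> z [t /= ht <-]; apply: hA; move: ht; by rewrite in_itv.
  - apply: connected_continuous_connected; first exact: segment_connected.
    apply: continuous_subspaceT => t.
    have h1 : (fun t : R => x.1 + t * (y.1 - x.1)) @ t --> (x.1 + t * (y.1 - x.1)).
      apply: cvgD; first exact: cvg_cst.
      by apply: cvgMl; exact: cvg_id.
    have h2 : (fun t : R => x.2 + t * (y.2 - x.2)) @ t --> (x.2 + t * (y.2 - x.2)).
      apply: cvgD; first exact: cvg_cst.
      by apply: cvgMl; exact: cvg_id.
    exact: (cvg_pair h1 h2).
exists 1; first by rewrite /= in_itv /= lexx ler01.
rewrite /gam !mul1r; case: x {hA gam} => x1 x2; case: y => y1 y2 /=.
by congr pair; ring.
Qed.

Lemma closure_ge0 (R : realType) (A : set (R * R)) (g : R * R -> R) :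
  continuous g -> (forall z, A z -> 0 <= g z) -> forall z, closure A z -> 0 <= g z.
Proof.
move=> cg hA z.
have cl : closed (g @^-1` [set r | 0 <= r]).
  apply: preimage_closed; last exact: closed_ge.
  by move=> w _; exact: cg.
have sub : A `<=` g @^-1` [set r | 0 <= r] by move=> w /hA.
by move/(closureS sub); rewrite -(closure_id _).1.
Qed.


Definition fl (R : realType) (Q x : R * R) := Q.1 * x.1 + Q.2 * x.2 - 1.

Lemma cramer_f (R : realType) (P1 P2 P3 G x : R * R) :
  cross (vsub P1 P2) (vsub P3 P2) * fl G x =
    cross (vsub P1 P2) (vsub P3 P2) * fl P2 x + cross (vsub G P2) (vsub P3 P2) * (fl P1 x - fl P2 x)
    + cross (vsub P1 P2) (vsub G P2) * (fl P3 x - fl P2 x).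
Proof.
by case: P1 P2 P3 G x => [? ?] [? ?] [? ?] [? ?] [? ?]; rewrite /fl /cross /vsub /=; ring.
Qed.

Lemma cross_nz (R : realType) (u w z z' : R * R) :
  u.1 * z.1 + u.2 * z.2 = 0 -> w.1 * z.1 + w.2 * z.2 != 0 ->
  u.1 * z'.1 + u.2 * z'.2 != 0 -> cross u w != 0.
Proof.
case: u w z z' => [u1 u2] [w1 w2] [z1 z2] [z1' z2']; rewrite /cross /= => h1 h2 h3.
apply/negP => /eqP c0.
have e1 : (w1 * z1 + w2 * z2) * u1 = 0.
  rewrite (_ : _ * u1 = (u1 * z1 + u2 * z2) * w1 + (u1 * w2 - u2 * w1) * z2); last by ring.
  by rewrite h1 c0; ring.
have e2 : (w1 * z1 + w2 * z2) * u2 = 0.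
  rewrite (_ : _ * u2 = (u1 * z1 + u2 * z2) * w2 - (u1 * w2 - u2 * w1) * z1); last by ring.
  by rewrite h1 c0; ring.
move/eqP: e1; rewrite mulf_eq0 (negbTE h2) /= => /eqP u10.
move/eqP: e2; rewrite mulf_eq0 (negbTE h2) /= => /eqP u20.
by move: h3; rewrite u10 u20 !mul0r addr0 eqxx.
Qed.

Lemma dot_vsub (R : realType) (P P' x : R * R) :
  (vsub P P').1 * x.1 + (vsub P P').2 * x.2 = fl P x - fl P' x.
Proof. by rewrite /vsub /fl /=; ring. Qed.

Lemma core (R : realType) (a0 b0 dx dy : R) (N M : nat) (Sp : set (R * R))
   (P1 P2 P3 Q w0 w1 w2 w3 : R * R) (s : R) :
  0 < dx -> 0 < dy -> s * s = 1 ->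
  (forall G : R * R, gx a0 dx N G.1 -> gx b0 dy M G.2 -> G <> origin R -> Sp G) ->
  (forall G, Sp G -> [/\ 0 <= fl G w0 * fl G w2, 0 <= fl G w1 * fl G w2
                      & 0 <= fl G w1 * fl G w3]) ->
  gx a0 dx N P1.1 -> gx b0 dy M P1.2 -> gx a0 dx N P2.1 -> gx b0 dy M P2.2 ->
  gx a0 dx N P3.1 -> gx b0 dy M P3.2 -> gx a0 dx N Q.1 -> gx b0 dy M Q.2 -> Sp Q ->
  fl P1 w0 = 0 -> fl P1 w1 = 0 -> fl P2 w1 = 0 -> fl P2 w2 = 0 ->
  fl P3 w2 = 0 -> fl P3 w3 = 0 ->
  0 < s * fl P2 w0 -> 0 < s * fl P2 w3 -> 0 < s * fl P3 w1 -> 0 < s * fl P1 w2 ->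
  s * fl Q w0 <= 0 -> s * fl Q w1 <= 0 -> s * fl Q w2 <= 0 -> False.
Proof.
move=> hdx hdy ss hgrid hH g1x g1y g2x g2y g3x g3y gqx gqy SQ.
move=> e10 e11 e21 e22 e32 e33 s20 s23 s31 s12 q0 q1 q2.
set u := vsub P1 P2; set w := vsub P3 P2; set c := cross u w.
have cf : forall G x, c * fl G x = c * fl P2 x + cross (vsub G P2) w * (fl P1 x - fl P2 x)
    + cross u (vsub G P2) * (fl P3 x - fl P2 x) by move=> G x; apply: cramer_f.
have hc : c != 0.
  apply: (cross_nz (z := w1) (z' := w2)); rewrite !dot_vsub.
  - by rewrite e11 e21 subrr.
  - rewrite e21 subr0; apply/negP => /eqP h; move: s31; rewrite h mulr0 ltxx //.
  - rewrite e22 subr0; apply/negP => /eqP h; move: s12; rewrite h mulr0 ltxx //.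
have k31 : 0 < fl P3 w1 * fl P1 w2.
  have := mulr_gt0 s31 s12.
  by rewrite (_ : s * fl P3 w1 * (s * fl P1 w2) = (s * s) * (fl P3 w1 * fl P1 w2)); [rewrite ss mul1r | ring].
have k20 : 0 < fl P2 w0 * fl P1 w2.
  have := mulr_gt0 s20 s12.
  by rewrite (_ : s * fl P2 w0 * (s * fl P1 w2) = (s * s) * (fl P2 w0 * fl P1 w2)); [rewrite ss mul1r | ring].
have k23 : 0 < fl P3 w1 * fl P2 w3.
  have := mulr_gt0 s31 s23.
  by rewrite (_ : s * fl P3 w1 * (s * fl P2 w3) = (s * s) * (fl P3 w1 * fl P2 w3)); [rewrite ss mul1r | ring].
have cc : 0 < c * c by rewrite lt0r mulf_neq0 //= -expr2 sqr_ge0.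
have NFall : forall G : R * R, gx a0 dx N G.1 -> gx b0 dy M G.2 -> NF u w (vsub G P2).
  move=> G gGx gGy.
  set A := cross (vsub G P2) w; set B := cross u (vsub G P2).
  have c1 : c * fl G w1 = B * fl P3 w1 by rewrite cf e11 e21 /A /B; ring.
  have c2 : c * fl G w2 = A * fl P1 w2 by rewrite cf e22 e32 /A /B; ring.
  have c0 : c * fl G w0 = c * fl P2 w0 + A * (0 - fl P2 w0) + B * (fl P3 w0 - fl P2 w0)
    by rewrite cf e10.
  have c3 : c * fl G w3 = c * fl P2 w3 + A * (fl P1 w3 - fl P2 w3) + B * (0 - fl P2 w3)
    by rewrite cf e33.
  rewrite /NF -/A -/B -/c.
  have [GO|nG] := eqVneq G (origin R).
    have fO : forall x, fl G x = -1 by move=> x; rewrite GO /fl /origin /=; ring.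
    rewrite (fO w1) in c1; rewrite (fO w2) in c2.
    have AB : A * B * (fl P3 w1 * fl P1 w2) = c * c.
      rewrite (_ : A * B * (fl P3 w1 * fl P1 w2) = (A * fl P1 w2) * (B * fl P3 w1)); last by ring.
      by rewrite -c1 -c2; ring.
    have ABp : 0 < A * B.
      by rewrite -(pmulr_lgt0 _ k31) AB.
    split; first exact: ltW.
    split => h; move: ABp; rewrite h ?mulr0 ?mul0r ltxx //.
  have [hG0 hG1 hG3] := hH G (hgrid G gGx gGy (fun e => negP nG (introT eqP e))).
  split.
    have : 0 <= A * B * (fl P3 w1 * fl P1 w2).
      rewrite (_ : A * B * _ = (c * fl G w1) * (c * fl G w2)); last by rewrite c1 c2; ring.
      rewrite (_ : _ * _ = (c * c) * (fl G w1 * fl G w2)); last by ring.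
      by apply: mulr_ge0 => //; exact: ltW.
    by rewrite pmulr_lge0.
  split => h.
    have : 0 <= (c - A) * A * (fl P2 w0 * fl P1 w2).
      rewrite (_ : _ * _ = (c * fl G w0) * (c * fl G w2)); last by rewrite c0 c2 h; ring.
      rewrite (_ : _ * _ = (c * c) * (fl G w0 * fl G w2)); last by ring.
      by apply: mulr_ge0 => //; exact: ltW.
    rewrite pmulr_lge0 // => h2.
    have : 0 <= A * A by rewrite -expr2 sqr_ge0.
    move: h2; rewrite mulrC (mulrC A c); lra.
  have : 0 <= (c - B) * B * (fl P3 w1 * fl P2 w3).
    rewrite (_ : _ * _ = (c * fl G w3) * (c * fl G w1)); last by rewrite c3 c1 h; ring.
    rewrite (_ : _ * _ = (c * c) * (fl G w3 * fl G w1)); last by ring.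
    by apply: mulr_ge0 => //; [exact: ltW | rewrite mulrC].
  rewrite pmulr_lge0 // => h2.
  have : 0 <= B * B by rewrite -expr2 sqr_ge0.
  move: h2; rewrite mulrC (mulrC B c); lra.
set AQ := cross (vsub Q P2) w; set BQ := cross u (vsub Q P2).
have cQ1 : c * fl Q w1 = BQ * fl P3 w1 by rewrite cf e11 e21 /AQ /BQ; ring.
have cQ2 : c * fl Q w2 = AQ * fl P1 w2 by rewrite cf e22 e32 /AQ /BQ; ring.
have cQ0 : c * fl Q w0 = c * fl P2 w0 + AQ * (0 - fl P2 w0) + BQ * (fl P3 w0 - fl P2 w0)
  by rewrite cf e10.
have hB0 : BQ * c <= 0.
  have : (BQ * c) * (s * fl P3 w1) <= 0.
    rewrite (_ : BQ * c * (s * fl P3 w1) = c * s * (BQ * fl P3 w1)); last by ring.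
    rewrite -cQ1 (_ : c * s * (c * fl Q w1) = (c * c) * (s * fl Q w1)); last by ring.
    by apply: mulr_ge0_le0 => //; exact: ltW.
  by rewrite pmulr_lle0.
have hA0 : AQ * c <= 0.
  have : (AQ * c) * (s * fl P1 w2) <= 0.
    rewrite (_ : AQ * c * (s * fl P1 w2) = c * s * (AQ * fl P1 w2)); last by ring.
    rewrite -cQ2 (_ : c * s * (c * fl Q w2) = (c * c) * (s * fl Q w2)); last by ring.
    by apply: mulr_ge0_le0 => //; exact: ltW.
  by rewrite pmulr_lle0.
have [nf1 [nf2 nf3]] := NFall Q gqx gqy.
rewrite -/AQ -/BQ -/c in nf1 nf2 nf3.
have AB0 : AQ = 0 -> BQ = 0 -> False.
  move=> a0' b0'; move: cQ0; rewrite a0' b0' !mul0r !addr0 => /(mulfI hc) e.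
  by move: q0; rewrite e leNgt s20.
have hBs : BQ * c < 0.
  rewrite lt_neqAle hB0 andbT; apply/negP => /eqP.
  move/eqP; rewrite mulf_eq0 (negbTE hc) orbF => /eqP b0'.
  have := nf2 b0' => h; have : AQ * c = 0 by lra.
  by move/eqP; rewrite mulf_eq0 (negbTE hc) orbF => /eqP a0'; apply: AB0.
have hAs : AQ * c < 0.
  rewrite lt_neqAle hA0 andbT; apply/negP => /eqP.
  move/eqP; rewrite mulf_eq0 (negbTE hc) orbF => /eqP a0'.
  have := nf3 a0' => h; have : BQ * c = 0 by lra.
  by move/eqP; rewrite mulf_eq0 (negbTE hc) orbF => /eqP b0'; apply: AB0.
exact: (lattice_main hdx hdy NFall g1x g1y g2x g2y g3x g3y gqx gqy hc hAs hBs).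
Qed.


Lemma arrP (R : realType) (S : set (R * R)) z :
  arr_complement S z <-> (forall P, S P -> fl P z != 0).
Proof.
rewrite /arr_complement /lineP /fl; split.
- move=> h P SP; apply/negP => /eqP e; apply: h; exists P => //=; lra.
- move=> h [P SP /= e]; move: (h P SP); rewrite e subrr eqxx //.
Qed.

Lemma H_lemma (R : realType) (S : set (R * R)) x0 : arr_complement S x0 ->
  forall Q, S Q -> forall q, closure (connected_component (arr_complement S) x0) q ->
  0 <= fl Q x0 * fl Q q.
Proof.
move=> hx0 Q SQ.
apply: closure_ge0.
  move=> p; apply: cvgMr; exact: lin_cont.
move=> z Cz; apply: ltW.
have nz : forall y, arr_complement S y -> fl Q y != 0 by move=> y /arrP; apply.
apply: (conn_sign (A := connected_component (arr_complement S) x0)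
   (g := fun y => fl Q x0 * fl Q y) (x := x0)).
- exact: component_connected.
- move=> p; apply: cvgMr; exact: lin_cont.
- exact: connected_component_refl.
- exact: Cz.
- move=> y Cy; rewrite mulf_neq0 //; first exact: nz.
  by apply: nz; apply: connected_component_sub Cy.
- by rewrite -expr2 lt0r sqr_ge0 andbT sqrf_eq0 nz.
Qed.

Lemma K_lemma (R : realType) (S : set (R * R)) x0 q :
  (forall Q, S Q -> 0 < fl Q x0 * fl Q q) ->
  closure (connected_component (arr_complement S) x0) q.
Proof.
move=> hq; apply: subset_closure; apply: seg_component => t /andP[t0 t1].
apply/arrP => P SP.
have := hq P SP.
set p := (_, _).
have e : fl P p = (1 - t) * fl P x0 + t * fl P q by rewrite /p /fl /=; ring.
have x0nz : fl P x0 != 0.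
  by apply/negP => /eqP h; move: (hq P SP); rewrite h mul0r ltxx.
move=> hpos; apply/negP => /eqP h0.
have : fl P x0 * fl P p = (1 - t) * (fl P x0 * fl P x0) + t * (fl P x0 * fl P q)
  by rewrite e; ring.
rewrite h0 mulr0 => /esym.
have sq : 0 < fl P x0 * fl P x0 by rewrite -expr2 lt0r sqr_ge0 andbT sqrf_eq0.
move: hpos sq; set X := fl P x0 * fl P x0; set Y := fl P x0 * fl P q => hY hX.
have h1 : 0 <= (1 - t) * X by apply: mulr_ge0; lra.
case: (ltP 0 t) => tp.
  have : 0 < t * Y by apply: mulr_gt0.
  lra.
have -> : t = 0 by lra.
rewrite subr0 mul1r mul0r addr0; lra.
Qed.

Lemma eps_fin (R : realType) (T : finType) (F : T -> R -> Prop) :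
  (forall x, exists2 e : R, 0 < e & forall t, 0 < t -> t <= e -> F x t) ->
  exists2 e : R, 0 < e & forall x t, 0 < t -> t <= e -> F x t.
Proof.
move=> h.
suff: forall s : seq T, exists2 e : R, 0 < e &
    forall x, x \in s -> forall t, 0 < t -> t <= e -> F x t.
  by case/(_ (enum T)) => e e0 he; exists e => // x t; apply: he; rewrite mem_enum.
elim=> [|y s [e e0 IH]]; first by exists 1.
have [e' e'0 hy] := h y.
exists (Order.min e e'); first by rewrite lt_min e0 e'0.
move=> x; rewrite inE => /orP[/eqP ->|xs] t t0; rewrite le_min => /andP[te te'].
- exact: hy.
- exact: IH.
Qed.

Definition gp (R : realType) (a b dx dy : R) (N M : nat) (ij : 'I_N.+1 * 'I_M.+1) : R * R :=
  (a + (ij.1 : nat)%:R * dx, b + (ij.2 : nat)%:R * dy).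

Lemma on_some_line (R : realType) (S : set (R * R)) (a b dx dy : R) (N M : nat) x0
    (Lc : set (R * R)) z :
  (forall Q, S Q <-> exists ij : 'I_N.+1 * 'I_M.+1, Q = gp a b dx dy ij /\ Q <> origin R) ->
  arr_complement S x0 ->
  side_line (closure (connected_component (arr_complement S) x0)) Lc ->
  closure (connected_component (arr_complement S) x0) z -> Lc z ->
  exists ij : 'I_N.+1 * 'I_M.+1, (gp a b dx dy ij != origin R) && (fl (gp a b dx dy ij) z == 0).
Proof.
move=> hS hx0 [al [be [c [hab -> hle _]]]] Dz Lz.
apply: contrapT => hno.
have pos : forall ij : 'I_N.+1 * 'I_M.+1, gp a b dx dy ij != origin R -> 0 < fl (gp a b dx dy ij) x0 * fl (gp a b dx dy ij) z.
  move=> ij hij; set Q := gp a b dx dy ij.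
  have SQ : S Q by apply/hS; exists ij; split => //; apply/eqP.
  have h1 := H_lemma hx0 SQ Dz.
  rewrite lt_neqAle h1 andbT eq_sym mulf_neq0 //.
    by move/arrP: hx0; apply.
  by apply/negP => h; apply: hno; exists ij; rewrite hij h.
pose F := fun (ij : 'I_N.+1 * 'I_M.+1) (t : R) => gp a b dx dy ij != origin R ->
   0 < fl (gp a b dx dy ij) x0 * fl (gp a b dx dy ij) (z.1 + t * al, z.2 + t * be).
have [e e0 he] : exists2 e : R, 0 < e & forall (ij : 'I_N.+1 * 'I_M.+1) t, 0 < t -> t <= e -> F ij t.
  apply: eps_fin => ij.
  case: (boolP (gp a b dx dy ij != origin R)) => hij; last first.
    by exists 1 => // t _ _; rewrite /F (negbTE hij).
  set Q := gp a b dx dy ij.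
  set al' := fl Q x0 * fl Q z.
  set bt := fl Q x0 * (Q.1 * al + Q.2 * be).
  have alp : 0 < al' := pos ij hij.
  exists (al' / (`|bt| + 1)).
    by rewrite divr_gt0 // ltr_wpDl.
  move=> t t0 te _.
  have eq : fl Q x0 * fl Q (z.1 + t * al, z.2 + t * be) = al' + t * bt.
    by rewrite /al' /bt /fl /=; ring.
  rewrite eq.
  have h1 : t * (`|bt| + 1) <= al'.
    by rewrite -ler_pdivlMr // ltr_wpDl.
  have h2 : - (t * `|bt|) <= t * bt.
    by rewrite -mulrN ler_wpM2l ?(ltW t0) // lerNl -normrN ler_norm.
  nra.
have Dz' : closure (connected_component (arr_complement S) x0) (z.1 + e * al, z.2 + e * be).
  apply: K_lemma => Q /hS [ij [-> hij]].
  by apply: (he ij e e0 (lexx e)); apply/eqP.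
have := hle _ Dz'; rewrite /=.
have := Lz; rewrite /= => Lz'.
have ab2 : 0 < al * al + be * be.
  rewrite lt_neqAle addr_ge0 ?andbT; try by rewrite -expr2 sqr_ge0.
  rewrite eq_sym paddr_eq0; try by rewrite -expr2 sqr_ge0.
  rewrite -!expr2 !sqrf_eq0; apply/negP => /andP[/eqP a0 /eqP b0]; apply: hab.
  by rewrite a0 b0.
nra.
Qed.

Lemma line_eq (R : realType) (al be c : R) (Q y z : R * R) :
  (al, be) <> origin R -> al * y.1 + be * y.2 = c -> al * z.1 + be * z.2 = c ->
  fl Q y = 0 -> fl Q z = 0 -> y <> z ->
  [set p : R * R | al * p.1 + be * p.2 = c] = lineP Q.
Proof.
case: Q y z => [Q1 Q2] [y1 y2] [z1 z2]; rewrite /fl /origin /= => hab hy hz fy fz yz.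
set k := al * Q2 - be * Q1.
have k1 : k * (z1 - y1) = 0.
  rewrite (_ : k * _ = Q2 * ((al * z1 + be * z2) - (al * y1 + be * y2))
     - be * ((Q1 * z1 + Q2 * z2 - 1) - (Q1 * y1 + Q2 * y2 - 1))); last by rewrite /k; ring.
  by rewrite hy hz fy fz; ring.
have k2 : k * (z2 - y2) = 0.
  rewrite (_ : k * _ = - Q1 * ((al * z1 + be * z2) - (al * y1 + be * y2))
     + al * ((Q1 * z1 + Q2 * z2 - 1) - (Q1 * y1 + Q2 * y2 - 1))); last by rewrite /k; ring.
  by rewrite hy hz fy fz; ring.
have k0 : k = 0.
  case: (eqVneq z1 y1) => [e1|n1]; last first.
    by move/eqP: k1; rewrite mulf_eq0 (subr_eq0 z1 y1) (negbTE n1) orbF => /eqP.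
  case: (eqVneq z2 y2) => [e2|n2]; last first.
    by move/eqP: k2; rewrite mulf_eq0 (subr_eq0 z2 y2) (negbTE n2) orbF => /eqP.
  by exfalso; apply: yz; rewrite e1 e2.
have ea : al = c * Q1.
  have e : c * Q1 - al = - k * y2 + al * (Q1 * y1 + Q2 * y2 - 1) by rewrite -hy /k; ring.
  move: e; rewrite fy k0 oppr0 !mul0r mulr0 addr0 => /eqP; rewrite subr_eq0 => /eqP.
  by move=> ->.
have eb : be = c * Q2.
  have e : c * Q2 - be = k * y1 + be * (Q1 * y1 + Q2 * y2 - 1) by rewrite -hy /k; ring.
  move: e; rewrite fy k0 !mul0r mulr0 addr0 => /eqP; rewrite subr_eq0 => /eqP.
  by move=> ->.
have c0 : c != 0.
  apply/negP => /eqP c0; apply: hab; by rewrite ea eb c0 !mul0r.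
rewrite /lineP; apply/seteqP; split => p /=; rewrite ea eb.
- move=> h; apply: (mulfI c0); rewrite mulr1 -[RHS]h; ring.
- by move=> h; rewrite -mulrA -mulrA -mulrDr h mulr1.
Qed.

Lemma side_is_lattice (R : realType) (S : set (R * R)) (a b dx dy : R) (N M : nat) x0
    (Lc : set (R * R)) (p q : R * R) :
  (forall Q, S Q <-> exists ij : 'I_N.+1 * 'I_M.+1, Q = gp a b dx dy ij /\ Q <> origin R) ->
  arr_complement S x0 ->
  side_line (closure (connected_component (arr_complement S) x0)) Lc ->
  p <> q ->
  (forall t : R, 0 <= t <= 1 ->
     closure (connected_component (arr_complement S) x0)
       (p.1 + t * (q.1 - p.1), p.2 + t * (q.2 - p.2)) /\
     Lc (p.1 + t * (q.1 - p.1), p.2 + t * (q.2 - p.2))) ->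
  exists P, S P /\ Lc = lineP P.
Proof.
move=> hS hx0 hside pq hseg.
set T := (N.+1 * M.+1)%N.
have T0 : (0 < T)%N by rewrite /T muln_gt0.
pose tm := fun m : 'I_T.+1 => (m : nat)%:R / (T%:R : R).
have tm01 : forall m, 0 <= tm m <= 1.
  move=> m; rewrite /tm divr_ge0 ?ler0n //= ler_pdivrMr ?ltr0n // mul1r ler_nat.
  by rewrite -ltnS.
pose pts := fun m => (p.1 + tm m * (q.1 - p.1), p.2 + tm m * (q.2 - p.2)).
pose pr := fun m (ij : 'I_N.+1 * 'I_M.+1) =>
  (gp a b dx dy ij != origin R) && (fl (gp a b dx dy ij) (pts m) == 0).
have ex : forall m, exists ij, pr m ij.
  move=> m; have [Dm Lm] := hseg _ (tm01 m).
  exact: (on_some_line hS hx0 hside Dm Lm).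
pose phi := fun m => odflt (ord0, ord0) [pick ij | pr m ij].
have phiP : forall m, pr m (phi m).
  move=> m; rewrite /phi; case: pickP => [ij //|none].
  by have [ij hij] := ex m; move: (none ij); rewrite hij.
have : ~~ injectiveb phi.
  apply/negP => /injectiveP inj.
  have := leq_card _ inj; rewrite card_prod !card_ord -/T.
  by rewrite ltnn.
move/injectivePn => [m1 [m2 m12 phi12]].
set Q := gp a b dx dy (phi m1).
have /andP[QO /eqP f1] := phiP m1.
have /andP[_ /eqP f2] := phiP m2.
rewrite -phi12 -/Q in f2.
have neq : pts m1 <> pts m2.
  move=> e; move/negP: m12; apply; apply/eqP.
  have ht : tm m1 = tm m2.
    case: (eqVneq q.1 p.1) => [e1|n1].
      case: (eqVneq q.2 p.2) => [e2|n2].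
        by exfalso; apply: pq; case: (p) (q) e1 e2 => ? ? [? ?] /= -> ->.
      have : (tm m1 - tm m2) * (q.2 - p.2) = 0.
        by move: e => [_ e]; rewrite mulrBl; lra.
      by move/eqP; rewrite mulf_eq0 subr_eq0 (subr_eq0 q.2) (negbTE n2) orbF => /eqP.
    have : (tm m1 - tm m2) * (q.1 - p.1) = 0.
      by move: e => [e _]; rewrite mulrBl; lra.
    by move/eqP; rewrite mulf_eq0 subr_eq0 (subr_eq0 q.1) (negbTE n1) orbF => /eqP.
  apply: val_inj; apply/eqP; rewrite -(eqr_nat R).
  move: ht; rewrite /tm => /(congr1 (fun x => x * T%:R)).
  by rewrite !divfK ?pnatr_eq0 -?lt0n // => ->.
case: hside => al [be [c [hab hLc hle _]]].
exists Q; split.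
  by apply/hS; exists (phi m1); split => //; apply/eqP.
rewrite hLc; apply: (line_eq hab _ _ f1 f2 neq).
- by have [_ ] := hseg _ (tm01 m1); rewrite hLc.
- by have [_ ] := hseg _ (tm01 m2); rewrite hLc.
Qed.


Definition lr_sign (R : realType) (x : lr) : R := if x is Right then -1 else 1.

Lemma side_sign (R : realType) (D : set (R * R)) (P w0 w1 : R * R) :
  fl P w0 = 0 -> fl P w1 = 0 -> w0 <> w1 ->
  (forall q, D q -> cross (vsub w1 w0) (vsub q w0) <= 0) ->
  forall q, D q ->
  0 <= (if cross (vsub w1 w0) (vsub (origin R) w0) < 0 then -1 else 1) * fl P q.
Proof.
move=> f0 f1 w01 hcw q Dq.
have id : forall z : R * R, cross (vsub w1 w0) (vsub z w0)
     + cross (vsub w1 w0) (vsub (origin R) w0) * fl P z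
   = z.1 * ((w1.2 - w0.2) * fl P w0 - w0.2 * (fl P w1 - fl P w0))
     + z.2 * ((w1.1 - w0.1) * (- fl P w0) + w0.1 * (fl P w1 - fl P w0)).
  move=> z; case: z P w0 w1 {f0 f1 w01 hcw Dq} => [z1 z2] [P1 P2] [a1 a2] [b1 b2].
  by rewrite /cross /vsub /fl /origin /=; ring.
rewrite f0 f1 !subrr !mulr0 !oppr0 !mulr0 !addr0 in id.
set cO := cross (vsub w1 w0) (vsub (origin R) w0) in id *.
have hq : cross (vsub w1 w0) (vsub q w0) = - cO * fl P q.
  by have := id q; rewrite !mulr0 addr0 => /eqP; rewrite addr_eq0 => /eqP ->; ring.
have cO0 : cO != 0.
  apply/negP => /eqP c0; apply: w01.
  move: (id (w0.1 + 1, w0.2)) (id (w0.1, w0.2 + 1)); rewrite c0 /cross /vsub /= !mul0r !addr0.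
  case: (w0) (w1) => [a1 a2] [b1 b2] /= h1 h2.
  have e2 : b2 = a2 by lra.
  have e1 : b1 = a1 by lra.
  by rewrite e1 e2.
have := hcw q Dq; rewrite hq.
case: ifP => [cneg|cpos] h.
  rewrite mulN1r oppr_ge0; move: h; rewrite pmulr_rle0 // oppr_gt0 //.
move: cpos => /negbT; rewrite -leNgt => cpos.
have cp : 0 < cO by rewrite lt_neqAle eq_sym cO0 cpos.
by rewrite mul1r; move: h; rewrite mulNr oppr_le0 pmulr_rge0.
Qed.

Lemma two_point (R : realType) (P P' x y : R * R) :
  fl P x = 0 -> fl P y = 0 -> fl P' x = 0 -> fl P' y = 0 -> x <> y -> P = P'.
Proof.
case: P P' x y => [p1 p2] [q1 q2] [x1 x2] [y1 y2]; rewrite /fl /= => h1 h2 h3 h4 xy.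
have cr : x1 * y2 - x2 * y1 != 0.
  apply/negP => /eqP c0; apply: xy.
  have e1 : y1 - x1 = - p2 * (x1 * y2 - x2 * y1).
    rewrite (_ : y1 - x1 = (p1 * x1 + p2 * x2) * y1 - (p1 * y1 + p2 * y2) * x1
      - (p1 * x1 + p2 * x2 - 1) * y1 + (p1 * y1 + p2 * y2 - 1) * x1); last by ring.
    by rewrite h1 h2; ring.
  have e2 : y2 - x2 = p1 * (x1 * y2 - x2 * y1).
    rewrite (_ : y2 - x2 = (p1 * x1 + p2 * x2) * y2 - (p1 * y1 + p2 * y2) * x2
      - (p1 * x1 + p2 * x2 - 1) * y2 + (p1 * y1 + p2 * y2 - 1) * x2); last by ring.
    by rewrite h1 h2; ring.
  rewrite c0 mulr0 in e1 e2.
  have -> : y1 = x1 by lra.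
  by have -> : y2 = x2 by lra.
have E1 : (p1 - q1) * (x1 * y2 - x2 * y1) = 0.
  rewrite (_ : _ * _ = (p1 * x1 + p2 * x2 - 1 - (q1 * x1 + q2 * x2 - 1)) * y2
     - (p1 * y1 + p2 * y2 - 1 - (q1 * y1 + q2 * y2 - 1)) * x2); last by ring.
  by rewrite h1 h2 h3 h4; ring.
have E2 : (p2 - q2) * (x1 * y2 - x2 * y1) = 0.
  rewrite (_ : _ * _ = (p1 * y1 + p2 * y2 - 1 - (q1 * y1 + q2 * y2 - 1)) * x1
     - (p1 * x1 + p2 * x2 - 1 - (q1 * x1 + q2 * x2 - 1)) * y1); last by ring.
  by rewrite h1 h2 h3 h4; ring.
move/eqP: E1; rewrite mulf_eq0 (negbTE cr) orbF subr_eq0 => /eqP ->.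
move/eqP: E2; rewrite mulf_eq0 (negbTE cr) orbF subr_eq0 => /eqP ->.
by [].
Qed.

Lemma prod_nonneg (R : realType) (c x y : R) : c != 0 -> 0 <= c * x -> 0 <= c * y -> 0 <= x * y.
Proof.
move=> c0 h1 h2.
have cc : 0 < c * c by rewrite -expr2 lt0r sqr_ge0 andbT sqrf_eq0.
have : 0 <= (c * c) * (x * y).
  by rewrite (_ : _ * _ = (c * x) * (c * y)); [exact: mulr_ge0 | ring].
by rewrite pmulr_rge0.
Qed.

Unset Implicit Arguments.

Theorem lemma4p2 (R : realType) (S : set (R * R)%type) (D : set (R * R)%type) (n : nat)
    (L : 'I_n -> set (R * R)%type) (v : 'I_n -> (R * R)%type) :
  rect_lattice S -> is_region S D -> bounded_pt D -> ~ D (origin R) ->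
  clockwise_sides D L v ->
  ~ (exists k : 'I_n, side_of_O v k = side_of_O v (ordS k) /\
                      side_of_O v (ordS k) = side_of_O v (ordS (ordS k))).
Proof.
move=> [a [b [dx [dy [N [M [hab hdx hdy [hc1 hc2 hc3] hSdef]]]]]]] [x0 [hx0 hD]] hbd hO hcw.
move=> [k [e1 e2]].
subst D.
set D := closure _ in hbd hO hcw *.
have hS : forall Q, S Q <-> exists ij : 'I_N.+1 * 'I_M.+1, Q = gp a b dx dy ij /\ Q <> origin R.
  move=> Q; rewrite hSdef; split.
  - move=> [[i [j [iN jM ->]]] nO].
    exists (Ordinal (iN : (i < N.+1)%N), Ordinal (jM : (j < M.+1)%N)); split => //.
  - move=> [[i j] [-> nO]]; split; last by move=> /= h; apply: nO; rewrite h.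
    by exists i, j; split => //; rewrite -ltnS.
have Sgrid : forall Q, S Q -> gx a dx N Q.1 /\ gx b dy M Q.2.
  move=> Q /hS [[i j] [-> _]]; split.
  - by exists i; split => //; rewrite -ltnS.
  - by exists j; split => //; rewrite -ltnS.
have gridS : forall G : R * R, gx a dx N G.1 -> gx b dy M G.2 -> G <> origin R -> S G.
  move=> [g1 g2] [i [iN /= ->]] [j [jM /= ->]] nO; apply/hS.
  exists (Ordinal (iN : (i < N.+1)%N), Ordinal (jM : (j < M.+1)%N)); split => //.
have [Linj hside hvne hseg hcwq] := hcw.
have segP : forall k' t, 0 <= t <= 1 ->
    D ((v k').1 + t * ((v (ordS k')).1 - (v k').1), (v k').2 + t * ((v (ordS k')).2 - (v k').2)) /\
    L k' ((v k').1 + t * ((v (ordS k')).1 - (v k').1), (v k').2 + t * ((v (ordS k')).2 - (v k').2)).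
  move=> k' t /andP[t0 t1].
  have : segment (v k') (v (ordS k')) ((v k').1 + t * ((v (ordS k')).1 - (v k').1),
     (v k').2 + t * ((v (ordS k')).2 - (v k').2)) by exists t.
  by rewrite -hseg => -[].
have latt : forall k', exists P, S P /\ L k' = lineP P.
  move=> k'; apply: (side_is_lattice hS hx0 (p := v k') (q := v (ordS k'))).
  - by apply/(hside (L k')); exists k'.
  - exact: hvne k'.
  - exact: segP.
have vert : forall k', [/\ D (v k'), D (v (ordS k')), L k' (v k') & L k' (v (ordS k'))].
  move=> k'.
  have [h0 h0'] := segP k' 0 ltac:(by rewrite lexx ler01).
  have [h1 h1'] := segP k' 1 ltac:(by rewrite lexx ler01).
  move: h0 h0' h1 h1'; rewrite !mul0r !addr0 !mul1r.
  rewrite (_ : (v k').1 + ((v (ordS k')).1 - (v k').1) = (v (ordS k')).1); last by ring.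
  rewrite (_ : (v k').2 + ((v (ordS k')).2 - (v k').2) = (v (ordS k')).2); last by ring.
  by rewrite -!surjective_pairing.
have linef : forall k' P, L k' = lineP P -> forall z, L k' z -> fl P z = 0.
  by move=> k' P -> z; rewrite /lineP /fl /= => ->; rewrite subrr.
set k1 := ordS k; set k2 := ordS k1.
have [P1 [SP1 hL1]] := latt k.
have [P2 [SP2 hL2]] := latt k1.
have [P3 [SP3 hL3]] := latt k2.
set w0 := v k; set w1 := v k1; set w2 := v k2; set w3 := v (ordS k2).
have [Dw0 Dw1 L0w0 L0w1] := vert k.
have [_ Dw2 L1w1 L1w2] := vert k1.
have [_ Dw3 L2w2 L2w3] := vert k2.
have e10 := linef _ _ hL1 _ L0w0.
have e11 := linef _ _ hL1 _ L0w1.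
have e21 := linef _ _ hL2 _ L1w1.
have e22 := linef _ _ hL2 _ L1w2.
have e32 := linef _ _ hL3 _ L2w2.
have e33 := linef _ _ hL3 _ L2w3.
have lrs : forall k', lr_sign R (side_of_O v k') =
    if cross (vsub (v (ordS k')) (v k')) (vsub (origin R) (v k')) < 0 then -1 else 1.
  by move=> k'; rewrite /side_of_O; case: ifP.
set s := lr_sign R (side_of_O v k).
have sg : forall k' P, L k' = lineP P -> lr_sign R (side_of_O v k') = s ->
    forall q, D q -> 0 <= s * fl P q.
  move=> k' P hL hs q Dq; rewrite -hs lrs.
  have [_ _ Lk Lk'] := vert k'.
  exact: (side_sign (linef _ _ hL _ Lk) (linef _ _ hL _ Lk') (hvne k') (hcwq k')).
have sg1 := sg k P1 hL1 erefl.
have sg2 := sg k1 P2 hL2 ltac:(by rewrite /s /k1 -e1).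
have sg3 := sg k2 P3 hL3 ltac:(by rewrite /s /k2 /k1 -e2 -e1).
have ss : s * s = 1 by rewrite /s; case: (side_of_O v k) => /=; ring.
have s0 : s != 0 by rewrite /s; case: (side_of_O v k) => /=; rewrite ?oppr_eq0 oner_eq0.
have strict : forall x : R, 0 <= x -> x != 0 -> 0 < x by move=> x h1 h2; rewrite lt_neqAle eq_sym h2 h1.
have ne12 : forall z z', z <> z' -> fl P1 z = 0 -> fl P1 z' = 0 -> fl P2 z = 0 -> fl P2 z' = 0 -> False.
  move=> z z' zz' a1 a2 a3 a4.
  have P12 := two_point a1 a2 a3 a4 zz'.
  have : L k = L k1 by rewrite hL1 hL2 P12.
  by move/Linj => kk; apply: (hvne k); rewrite -/k1 -kk.
have ne23 : forall z z', z <> z' -> fl P2 z = 0 -> fl P2 z' = 0 -> fl P3 z = 0 -> fl P3 z' = 0 -> False.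
  move=> z z' zz' a1 a2 a3 a4.
  have P23 := two_point a1 a2 a3 a4 zz'.
  have : L k1 = L k2 by rewrite hL2 hL3 P23.
  by move/Linj => kk; apply: (hvne k1); rewrite -/k2 -kk.
have s20 : 0 < s * fl P2 w0.
  apply: strict; first exact: sg2.
  rewrite mulf_neq0 //; apply/negP => /eqP h.
  by apply: (ne12 w0 w1 (hvne k) e10 e11 h e21).
have s12 : 0 < s * fl P1 w2.
  apply: strict; first exact: sg1.
  rewrite mulf_neq0 //; apply/negP => /eqP h.
  by apply: (ne12 w1 w2 (hvne k1) e11 h e21 e22).
have s31 : 0 < s * fl P3 w1.
  apply: strict; first exact: sg3.
  rewrite mulf_neq0 //; apply/negP => /eqP h.
  by apply: (ne23 w1 w2 (hvne k1) e21 e22 h e32).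
have s23 : 0 < s * fl P2 w3.
  apply: strict; first exact: sg2.
  rewrite mulf_neq0 //; apply/negP => /eqP h.
  by apply: (ne23 w2 w3 (hvne k2) e22 h e32 e33).
have x0nz : forall Q, S Q -> fl Q x0 != 0 by move=> Q SQ; move/arrP: hx0; apply.
have HD : forall Q, S Q -> forall q, D q -> 0 <= fl Q x0 * fl Q q.
  by move=> Q SQ q Dq; apply: (H_lemma hx0 SQ Dq).
have [Q [SQ hQ]] : exists Q, S Q /\ s * fl Q x0 < 0.
  apply: contrapT => hno.
  have allpos : forall Q, S Q -> 0 < s * fl Q x0.
    move=> Q SQ; rewrite lt_neqAle eq_sym mulf_neq0 ?x0nz //=.
    rewrite leNgt; apply/negP => h; apply: hno; exists Q; split => //.
  move: allpos; rewrite /s; case: (side_of_O v k) => /= allpos.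
  - (* Left: scaling *)
    have Dt : forall t : R, 1 <= t -> D (t * x0.1, t * x0.2).
      move=> t t1; apply: K_lemma => Q SQ.
      have hq := allpos Q SQ; rewrite mul1r in hq.
      have : fl Q (t * x0.1, t * x0.2) - fl Q x0 = (t - 1) * (fl Q x0 + 1).
        by rewrite /fl /=; ring.
      move=> e; apply: mulr_gt0 => //.
      have : 0 <= (t - 1) * (fl Q x0 + 1) by apply: mulr_ge0; lra.
      lra.
    have [Mb hMb] := hbd.
    have Sab : S (a, b).
      apply/hS; exists (ord0, ord0); split => //.
      by rewrite /gp /= !mul0r !addr0.
    have x0O : x0 <> origin R.
      move=> e; have := allpos _ Sab; rewrite e /fl /origin /= !mulr0 addr0 mul1r.
      by rewrite sub0r oppr_gt0 ltr10.
    have : x0.1 != 0 \/ x0.2 != 0.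
      case: (eqVneq x0.1 0) => h1; last by left.
      case: (eqVneq x0.2 0) => h2; last by right.
      by exfalso; apply: x0O; rewrite (surjective_pairing x0) h1 h2.
    case => hx.
    + set t := (`|Mb| + 1) / `|x0.1| + 1.
      have ax : 0 < `|x0.1| by rewrite normr_gt0.
      have t1 : 1 <= t by rewrite /t lerDr divr_ge0.
      have [hm _] := hMb _ (Dt t t1).
      move: hm; rewrite /= normrM ger0_norm; last by lra.
      rewrite /t mulrDl divfK ?gt_eqF // mul1r.
      have : Mb <= `|Mb| := ler_norm Mb.
      lra.
    + set t := (`|Mb| + 1) / `|x0.2| + 1.
      have ax : 0 < `|x0.2| by rewrite normr_gt0.
      have t1 : 1 <= t by rewrite /t lerDr divr_ge0.
      have [_ hm] := hMb _ (Dt t t1).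
      move: hm; rewrite /= normrM ger0_norm; last by lra.
      rewrite /t mulrDl divfK ?gt_eqF // mul1r.
      have : Mb <= `|Mb| := ler_norm Mb.
      lra.
  - (* Right: origin in D *)
    apply: hO; apply: K_lemma => Q SQ.
    have := allpos Q SQ; rewrite /fl /origin /= !mulr0 addr0 sub0r.
    by rewrite mulN1r => h; rewrite mulrN1 oppr_gt0; move: h; rewrite oppr_gt0.
have hQD : forall q, D q -> s * fl Q q <= 0.
  move=> q Dq; have h := HD Q SQ q Dq.
  have : (s * fl Q x0) * (fl Q x0 * fl Q q) <= 0.
    by apply: mulr_le0_ge0 => //; exact: ltW.
  rewrite (_ : _ * _ = (fl Q x0 * fl Q x0) * (s * fl Q q)); last by ring.
  by rewrite pmulr_rle0 // -expr2 lt0r sqr_ge0 andbT sqrf_eq0 x0nz.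
have hH : forall G, S G -> [/\ 0 <= fl G w0 * fl G w2, 0 <= fl G w1 * fl G w2
                      & 0 <= fl G w1 * fl G w3].
  move=> G SG; have hG := HD G SG; have nz := x0nz G SG.
  split; apply: (prod_nonneg nz); apply: hG => //.
have [g1x g1y] := Sgrid _ SP1.
have [g2x g2y] := Sgrid _ SP2.
have [g3x g3y] := Sgrid _ SP3.
have [gqx gqy] := Sgrid _ SQ.
exact: (core hdx hdy ss gridS hH g1x g1y g2x g2y g3x g3y gqx gqy SQ e10 e11 e21 e22 e32 e33
  s20 s23 s31 s12 (hQD _ Dw0) (hQD _ Dw1) (hQD _ Dw2)).
Qed.
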